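(* Let $A\subseteq[n]^2$, let $\Gamma=\Gamma(A)$ be the gate defined below, and let $x\in\{0,1\}^{4n}$ satisfy $\varphi_{one}(x)$. (i) If $x_W\ne x_E$ or $\mathrm{hw}(x_S)\ne1$, then $\mathrm{Sig}(\Gamma,x)=0$. (ii) If $\varphi_{prop}(x)$ holds, let $u=x_W$, $v=x_N$. Then $\mathrm{Sig}(\Gamma,x)=q_u-r_{u,v}-s_{u,v}-\alpha_{u,v}-\beta_{u,v}$ if $(u,v)\notin A$, and $\mathrm{Sig}(\Gamma,x)=q_u-r_{u,v}-s_{u,v}+1$ if $(u,v)\in A$. (iii) If $x_W=x_E$, $\mathrm{hw}(x_S)=1$ and $x_N\ne x_S$, let $u=x_W$, $v=x_N$, $w=x_S$. Then $\mathrm{Sig}(\Gamma,x)$ equals $p_{u,v,w}$ if $(u,v)\notin A,(u,w)\notin A$; $p_{u,v,w}+\alpha_{u,v}-\beta_{u,v}$ if $(u,v)\notin A,(u,w)\in A$; $p_{u,v,w}+\beta_{u,w}-\alpha_{u,w}$ if $(u,v)\in A,(u,w)\notin A$; and $p_{u,v,w}+\beta_{u,w}-\alpha_{u,w}+\alpha_{u,v}-\beta_{u,v}+1$ if $(u,v)\in A,(u,w)\in A$.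
   Context: $\Gamma(A)$: vertices $b_{i,j}$, $(i,j)\in[n]^2$, with the south edge of $b_{i,j}$ equal to the north edge of $b_{i+1,j}$ and the east edge of $b_{i,j}$ equal to the west edge of $b_{i,j+1}$; $4n$ dangling edges ordered as north edges of row $1$ (columns $1..n$), east edges of column $n$ (rows $1..n$), south edges of row $n$, west edges of column $1$; $x=x_Nx_Ex_Sx_W$ accordingly, and a weight-one string $0^{v-1}10^{n-v}\in\{0,1\}^n$ is identified with $v\in[n]$. Two apices $a_1,a_2$ with signature $\mathtt{HW}_{=1}$ (value $1$ iff exactly one incident edge active). For $\tau\notin A$, $b_\tau$ has signature $\mathtt{PASS}$; for $\tau\in A$, $b_\tau$ is also joined to $a_1$ and $a_2$ (its 5th and 6th edges) and has signature $\mathtt{PRE}$. All edge weights $1$. For $x\in\{0,1\}^4$ ordered north, east, south, west: $\mathtt{PASS}(1111)=-1$, $\mathtt{PASS}(0000)=\mathtt{PASS}(0101)=\mathtt{PASS}(1010)=1$, else $0$. For $x\in\{0,1\}^4,y\in\{0,1\}^2$: $\mathtt{PRE}(x00)=\mathtt{PASS}(x)$; $\mathtt{PRE}(xy)=1$ for $xy\in\{101011,111111,100001,110101,001010,011110\}$; else $0$. $\varphi_{one}(x)\equiv\mathrm{hw}(x_N)=\mathrm{hw}(x_W)=1$; $\varphi_{prop}(x)\equiv x_N=x_S\wedge x_W=x_E$. For $u,v\in[n]$: $\alpha_{u,v}=|A\cap\{(1,v),\dots,(u-1,v)\}|$, $\beta_{u,v}=|A\cap\{(u+1,v),\dots,(n,v)\}|$;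 $q_u=\sum_{z\in[n]}\big(\alpha_{u,z}\beta_{u,z}-\binom{\alpha_{u,z}}2-\binom{\beta_{u,z}}2\big)$; $p_{u,v,w}=(\alpha_{u,v}-\beta_{u,v})(\beta_{u,w}-\alpha_{u,w})$; $r_{u,v}=\sum_{z\in[n]\setminus\{v\},(u,z)\in A}\beta_{u,z}$; $s_{u,v}=\sum_{z\in[n]\setminus\{v\},(u,z)\in A}\alpha_{u,z}$. $\mathrm{Sig}(\Gamma,x)=\sum_y w_\Gamma(xy)\prod_v f_v((xy)|_{I(v)})$ over assignments $y$ to the non-dangling edges. *)

(* Defs.v *)
From HB Require Import structures.
From mathcomp Require Import all_boot all_order all_algebra.
Set Implicit Arguments. Unset Strict Implicit. Unset Printing Implicit Defensive.
Import Order.TTheory GRing.Theory Num.Theory.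
Local Open Scope ring_scope.

(* Indices [n] = {1..n} are represented 0-based by 'I_n.
   Bit strings in {0,1}^n are finite functions 'I_n -> bool. *)

Definition hw (n : nat) (s : {ffun 'I_n -> bool}) : nat := #|[set i | s i]|.

Definition onehot (n : nat) (v : 'I_n) : {ffun 'I_n -> bool} := [ffun i => i == v].

Definition b2i (b : bool) : int := if b then 1 else 0.

Definition PASS (N E S W : bool) : int :=
  match N, E, S, W with
  | true, true, true, true => -1
  | false, false, false, false => 1
  | false, true, false, true => 1
  | true, false, true, false => 1
  | _, _, _, _ => 0
  end.

Definition PRE (N E S W y1 y2 : bool) : int :=
  match y1, y2 with
  | false, false => PASS N E S W
  | true, true =>
      match N, E, S, W with
      | true, false, true, false => 1
      | true, true, true, true => 1
      | _, _, _, _ => 0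
      end
  | false, true =>
      match N, E, S, W with
      | true, false, false, false => 1
      | true, true, false, true => 1
      | _, _, _, _ => 0
      end
  | true, false =>
      match N, E, S, W with
      | false, false, true, false => 1
      | false, true, true, true => 1
      | _, _, _, _ => 0
      end
  end.

Definition HW1 (n : nat) (E : {ffun 'I_n * 'I_n -> bool}) : int :=
  b2i (#|[set t | E t]| == 1)%N.

(* Edge variables:
   - Hz (i, j), i : 'I_n, j : 'I_n.+1 : the horizontal edge in row i left of column j,
     i.e. the west edge of b_{i,j} (= east edge of b_{i,j-1});
     Hz (i, 0) is the dangling west edge and Hz (i, n) the dangling east edge of row i.
   - Vt (i, j), i : 'I_n.+1, j : 'I_n : the vertical edge in column j above row i,
     i.e. the north edge of b_{i,j} (= south edge of b_{i-1,j});
     Vt (0, j) is the dangling north edge and Vt (n, j) the dangling south edge.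
   - E1 t, E2 t : the edges from b_t to the apices a_1, a_2 (existing only for t in A). *)

Definition up (n : nat) (i : 'I_n) : 'I_n.+1 := widen_ord (leqnSn n) i.
Definition dn (n : nat) (i : 'I_n) : 'I_n.+1 := lift ord0 i.

Definition boundary_ok (n : nat) (A : {set 'I_n * 'I_n})
  (xN xE xS xW : {ffun 'I_n -> bool})
  (Hz : {ffun 'I_n * 'I_n.+1 -> bool}) (Vt : {ffun 'I_n.+1 * 'I_n -> bool})
  (E1 E2 : {ffun 'I_n * 'I_n -> bool}) : bool :=
  [forall i : 'I_n, (Hz (i, ord0) == xW i) && (Hz (i, ord_max) == xE i)] &&
  [forall j : 'I_n, (Vt (ord0, j) == xN j) && (Vt (ord_max, j) == xS j)] &&
  [forall t, (t \notin A) ==> (~~ E1 t && ~~ E2 t)].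

Definition vertex_val (n : nat) (A : {set 'I_n * 'I_n})
  (Hz : {ffun 'I_n * 'I_n.+1 -> bool}) (Vt : {ffun 'I_n.+1 * 'I_n -> bool})
  (E1 E2 : {ffun 'I_n * 'I_n -> bool}) (t : 'I_n * 'I_n) : int :=
  let i := t.1 in let j := t.2 in
  let N := Vt (up i, j) in
  let E := Hz (i, dn j) in
  let S := Vt (dn i, j) in
  let W := Hz (i, up j) in
  if t \in A then PRE N E S W (E1 t) (E2 t) else PASS N E S W.

Definition Sig (n : nat) (A : {set 'I_n * 'I_n}) (xN xE xS xW : {ffun 'I_n -> bool}) : int :=
  \sum_(Hz : {ffun 'I_n * 'I_n.+1 -> bool})
  \sum_(Vt : {ffun 'I_n.+1 * 'I_n -> bool})
  \sum_(E1 : {ffun 'I_n * 'I_n -> bool})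
  \sum_(E2 : {ffun 'I_n * 'I_n -> bool} | boundary_ok A xN xE xS xW Hz Vt E1 E2)
    (HW1 E1 * HW1 E2 * \prod_(t : 'I_n * 'I_n) vertex_val A Hz Vt E1 E2 t).

Definition phi_one (n : nat) (xN xW : {ffun 'I_n -> bool}) : Prop :=
  hw xN = 1%N /\ hw xW = 1%N.

Definition phi_prop (n : nat) (xN xE xS xW : {ffun 'I_n -> bool}) : Prop :=
  xN = xS /\ xW = xE.

Definition alpha (n : nat) (A : {set 'I_n * 'I_n}) (u v : 'I_n) : nat :=
  #|[set i : 'I_n | (i < u)%N && ((i, v) \in A)]|.
Definition beta (n : nat) (A : {set 'I_n * 'I_n}) (u v : 'I_n) : nat :=
  #|[set i : 'I_n | (u < i)%N && ((i, v) \in A)]|.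

Definition qq (n : nat) (A : {set 'I_n * 'I_n}) (u : 'I_n) : int :=
  \sum_(z : 'I_n) ((alpha A u z * beta A u z)%:Z - ('C(alpha A u z, 2))%:Z
                   - ('C(beta A u z, 2))%:Z).

Definition pp (n : nat) (A : {set 'I_n * 'I_n}) (u v w : 'I_n) : int :=
  ((alpha A u v)%:Z - (beta A u v)%:Z) * ((beta A u w)%:Z - (alpha A u w)%:Z).

Definition rr (n : nat) (A : {set 'I_n * 'I_n}) (u v : 'I_n) : int :=
  \sum_(z : 'I_n | (z != v) && ((u, z) \in A)) (beta A u z)%:Z.

Definition ss (n : nat) (A : {set 'I_n * 'I_n}) (u v : 'I_n) : int :=
  \sum_(z : 'I_n | (z != v) && ((u, z) \in A)) (alpha A u z)%:Z.

(* Main.v *)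
Require Import Defs.
From HB Require Import structures.
From mathcomp Require Import all_boot all_order all_algebra.
From mathcomp Require Import zify ring lra.
Import Order.TTheory GRing.Theory Num.Theory.
Local Open Scope ring_scope.
Set Implicit Arguments. Unset Strict Implicit.

Definition nxt (N y1 y2 : bool) := (N && ~~ y2) || y1.
Definition validb (N S y1 y2 : bool) :=
  match y1, y2 with
  | false, false => S == N
  | true, true => N && S
  | false, true => N && ~~ S
  | true, false => ~~ N && S end.

Definition st (n : nat) (xN : {ffun 'I_n -> bool}) (t1 t2 : 'I_n * 'I_n) (k : nat) (j : 'I_n) : bool :=
  let e1 := (j == t1.2) && (t1.1 < k)%N in
  let e2 := (j == t2.2) && (t2.1 < k)%N in
  if e1 && e2 then (t2.1 <= t1.1)%N else if e1 then true else if e2 then false else xN j.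

Lemma st0 n xN t1 t2 j : @st n xN t1 t2 0 j = xN j.
Proof. by rewrite /st !andbF. Qed.

Ltac bb := repeat (match goal with
 | |- context [(?x <= ?y)%N] => case: (leqP x y) => ?
 | |- context [(?x == ?y :> nat)] => case: (eqVneq x y) => ?
 | |- context [if ?b then _ else _] => case: b
 end; simpl); try lia.

Lemma st_step n xN t1 t2 (i j : 'I_n) :
  @st n xN t1 t2 i.+1 j = nxt (st xN t1 t2 i j) ((i, j) == t1) ((i, j) == t2).
Proof.
case: t1 t2 => [a1 j1] [a2 j2]; rewrite /st /nxt /= !xpair_eqE -!val_eqE /=.
move: (val j == val j1) (val j == val j2) (xN j) => b1 b2 x.
case: b1; case: b2; rewrite /= ?andbF ?andbT ?orbF; bb.
Qed.

Lemma vv_gen (inA : bool) (N E S W y1 y2 : bool) :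
  (~~ inA -> ~~ y1 && ~~ y2) ->
  (if inA then PRE N E S W y1 y2 else PASS N E S W) =
  if E == W then b2i (validb N S y1 y2) * (if [&& E, N, S, ~~ y1 & ~~ y2] then -1 else 1) else 0.
Proof.
by case: inA => [_|/(_ isT)/andP[/negbTE-> /negbTE->]]; case: N; case: E; case: S; case: W;
  try case: y1; try case: y2.
Qed.

Lemma validb_nxt N S y1 y2 : validb N S y1 y2 -> S = nxt N y1 y2.
Proof. by case: N; case: S; case: y1; case: y2. Qed.

Definition Ind n (t : 'I_n * 'I_n) : {ffun 'I_n * 'I_n -> bool} := [ffun s => s == t].

Definition bndHV n (xN xE xS xW : {ffun 'I_n -> bool})
  (Hz : {ffun 'I_n * 'I_n.+1 -> bool}) (Vt : {ffun 'I_n.+1 * 'I_n -> bool}) : bool :=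
  [forall i : 'I_n, (Hz (i, ord0) == xW i) && (Hz (i, ord_max) == xE i)] &&
  [forall j : 'I_n, (Vt (ord0, j) == xN j) && (Vt (ord_max, j) == xS j)].

Definition Gfun n (A : {set 'I_n * 'I_n}) (xN xE xS xW : {ffun 'I_n -> bool}) E1 E2 : int :=
  \sum_(Hz : {ffun 'I_n * 'I_n.+1 -> bool}) \sum_(Vt : {ffun 'I_n.+1 * 'I_n -> bool})
   b2i (bndHV xN xE xS xW Hz Vt) * \prod_(t : 'I_n * 'I_n) vertex_val A Hz Vt E1 E2 t.

Lemma val_up n (i : 'I_n) : val (up i) = val i. Proof. by []. Qed.
Lemma val_dn n (i : 'I_n) : val (dn i) = (val i).+1. Proof. by []. Qed.

Section G.
Variables (n : nat) (A : {set 'I_n * 'I_n}) (xN xE xS xW : {ffun 'I_n -> bool}) (t1 t2 : 'I_n * 'I_n).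
Hypotheses (t1A : t1 \in A) (t2A : t2 \in A).

Definition H0 : {ffun 'I_n * 'I_n.+1 -> bool} := [ffun p : 'I_n * 'I_n.+1 => xW p.1].
Definition V0 : {ffun 'I_n.+1 * 'I_n -> bool} := [ffun p : 'I_n.+1 * 'I_n => st xN t1 t2 p.1 p.2].

Definition valid0 (t : 'I_n * 'I_n) :=
  validb (st xN t1 t2 t.1 t.2) (st xN t1 t2 t.1.+1 t.2) (t == t1) (t == t2).
Definition sg0 (t : 'I_n * 'I_n) : int :=
  if [&& xW t.1, st xN t1 t2 t.1 t.2, st xN t1 t2 t.1.+1 t.2, t != t1 & t != t2] then -1 else 1.

Lemma notA t : t \notin A -> ~~ Ind t1 t && ~~ Ind t2 t.
Proof.
move=> h; rewrite !ffunE; apply/andP; split; apply/negP=> /eqP e; by move: h; rewrite e ?t1A ?t2A.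
Qed.

Lemma vvE Hz Vt t : vertex_val A Hz Vt (Ind t1) (Ind t2) t =
  let i := t.1 in let j := t.2 in
  let N := Vt (up i, j) in let E := Hz (i, dn j) in let S := Vt (dn i, j) in let W := Hz (i, up j) in
  if E == W then b2i (validb N S (Ind t1 t) (Ind t2 t)) *
     (if [&& E, N, S, ~~ Ind t1 t & ~~ Ind t2 t] then -1 else 1) else 0.
Proof. by rewrite /vertex_val; apply: vv_gen => /notA. Qed.

Lemma determ Hz Vt : bndHV xN xE xS xW Hz Vt ->
  (forall t, vertex_val A Hz Vt (Ind t1) (Ind t2) t != 0) -> Hz = H0 /\ Vt = V0.
Proof.
case/andP=> /forallP hH /forallP hV hnz; split.
- have key : forall i k (hk : (k < n.+1)%N), Hz (i, Ordinal hk) = xW i.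
    move=> i; elim=> [|k IH] hk.
      have -> : Ordinal hk = ord0 by apply: val_inj.
      by case/andP: (hH i) => /eqP.
    have hk' : (k < n)%N by [].
    have := hnz (i, Ordinal hk'); rewrite vvE /=.
    have -> : dn (Ordinal hk') = Ordinal hk by apply: val_inj.
    have -> : up (Ordinal hk') = Ordinal (ltnW hk) by apply: val_inj.
    by rewrite IH; case: (Hz (i, Ordinal hk) =P xW i) => [-> //|_]; rewrite eqxx.
  apply/ffunP=> [[i j]]; rewrite ffunE /=.
  by case: j => j hj; rewrite key.
- have key : forall j k (hk : (k < n.+1)%N), Vt (Ordinal hk, j) = st xN t1 t2 k j.
    move=> j; elim=> [|k IH] hk.
      have -> : Ordinal hk = ord0 by apply: val_inj.
      by rewrite st0; case/andP: (hV j) => /eqP.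
    have hk' : (k < n)%N by [].
    have := hnz (Ordinal hk', j); rewrite vvE /=.
    have -> : dn (Ordinal hk') = Ordinal hk by apply: val_inj.
    have -> : up (Ordinal hk') = Ordinal (ltnW hk) by apply: val_inj.
    rewrite IH; case: ifP => _; last by rewrite eqxx.
    case V: validb; last by rewrite mul0r eqxx.
    move=> _; rewrite (validb_nxt V) !ffunE.
    by rewrite -(st_step xN t1 t2 (Ordinal hk') j).
  apply/ffunP=> [[i j]]; rewrite ffunE /=.
  by case: i => i hi; rewrite key.
Qed.


Lemma sum_eq1 (T : finType) (a : T) (c : int) : \sum_(x : T) b2i (x == a) * c = c.
Proof.
rewrite (bigD1 a) //= eqxx mul1r big1 ?addr0 // => x /negbTE ->; by rewrite mul0r.
Qed.

Lemma bnd0 : bndHV xN xE xS xW H0 V0 = (xW == xE) && ([ffun j => st xN t1 t2 n j] == xS).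
Proof.
rewrite /bndHV /H0 /V0; congr andb.
- apply/forallP/eqP => [h|->]; last by move=> i; rewrite !ffunE /= !eqxx.
  apply/ffunP=> i; by case/andP: (h i); rewrite !ffunE /= => _ /eqP.
- apply/forallP/eqP => [h|<-]; last by move=> j; rewrite !ffunE /= st0 !eqxx.
  apply/ffunP=> j; by case/andP: (h j); rewrite !ffunE /= => _ /eqP.
Qed.

Lemma zero_case Hz Vt : (Hz != H0) || (Vt != V0) ->
  b2i (bndHV xN xE xS xW Hz Vt) * \prod_t vertex_val A Hz Vt (Ind t1) (Ind t2) t = 0.
Proof.
move=> ne; case B: (bndHV xN xE xS xW Hz Vt); rewrite ?mul0r // mul1r.
apply/eqP/negPn/negP => nz; move: ne.
have [-> ->] := determ B (fun t => (elimT (prodf_neq0 _ _)) nz t isT).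
by rewrite !eqxx.
Qed.

Lemma G_eval : Gfun A xN xE xS xW (Ind t1) (Ind t2) =
  b2i (xW == xE) * b2i ([ffun j => st xN t1 t2 n j] == xS) *
  \prod_(t : 'I_n * 'I_n) (b2i (valid0 t) * sg0 t).
Proof.
set C := (RHS).
have pt : forall Hz Vt, b2i (bndHV xN xE xS xW Hz Vt) * \prod_t vertex_val A Hz Vt (Ind t1) (Ind t2) t
   = b2i (Hz == H0) * (b2i (Vt == V0) * C).
  move=> Hz Vt; case: (boolP ((Hz != H0) || (Vt != V0))) => [ne|].
    rewrite zero_case //.
    by case/orP: ne => /negbTE ->; rewrite /= ?mul0r ?mulr0.
  rewrite negb_or !negbK => /andP[/eqP -> /eqP ->]; rewrite !eqxx !mul1r.
  rewrite bnd0 /C; case: (xW == xE); case: (_ == xS); rewrite /= ?mul0r ?mul1r //.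
  apply: eq_bigr => [[i j]] _; rewrite vvE /= !ffunE /= eqxx.
  by rewrite /valid0 /sg0 /=.
rewrite /Gfun (eq_bigr (fun Hz => b2i (Hz == H0) * C)); first by rewrite sum_eq1.
move=> Hz _; rewrite (eq_bigr (fun Vt => b2i (Vt == V0) * (b2i (Hz == H0) * C))).
  by rewrite sum_eq1.
by move=> Vt _; rewrite pt mulrCA.
Qed.
End G.

Lemma prod_b2i (T : finType) (P : pred T) : \prod_(t : T) b2i (P t) = b2i [forall t, P t].
Proof.
case: (boolP [forall t, P t]) => [/forallP h|].
  by rewrite big1 // => t _; rewrite h.
rewrite negb_forall => /existsP[t /negbTE h].
by rewrite (bigD1 t) //= h mul0r.
Qed.

Lemma prod_if1 (T : finType) (a : T) (X : int) : \prod_(t : T) (if t == a then X else 1) = X.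
Proof. by rewrite (bigD1 a) //= eqxx big1 ?mulr1 // => t /negbTE ->. Qed.

Section S.
Variables (n : nat) (u v : 'I_n) (t1 t2 : 'I_n * 'I_n).

Definition validP := let: (a1, j1) := t1 in let: (a2, j2) := t2 in
  if j1 == j2 then (if j1 == v then (a2 <= a1)%N else (a1 < a2)%N) else j2 == v.

Definition X1 : int := let: (a1, j1) := t1 in let: (a2, j2) := t2 in
  if j1 == j2 then (if j1 == v then 1 else if (a1 < u < a2)%N then -1 else 1)
  else (if (a1 < u)%N then -1 else 1).
Definition X2 : int := let: (a1, j1) := t1 in let: (a2, j2) := t2 in
  if j1 == j2 then (if j1 == v then (if (a2 <= u <= a1)%N then 1 else -1) else -1)
  else (if (u < a2)%N then -1 else 1).

Definition finalP := if t1.2 == t2.2 then onehot v else onehot t1.2.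


Lemma valid_t1t2 : valid0 (onehot v) t1 t2 t1 && valid0 (onehot v) t1 t2 t2 = validP.
Proof.
rewrite /valid0 /validP /st; case: t1 t2 => [a1 j1] [a2 j2] /=.
rewrite !ffunE !eqxx /= !xpair_eqE -!val_eqE /=.
bb.
Qed.


Lemma all_valid : [forall t, valid0 (onehot v) t1 t2 t] = validP.
Proof.
rewrite -valid_t1t2; apply/forallP/andP => [h|[h1 h2] t]; first by split; apply: h.
case: (eqVneq t t1) => [->//|ne1]; case: (eqVneq t t2) => [->//|ne2].
rewrite /valid0; case: t ne1 ne2 => i j ne1 ne2 /=.
by rewrite (st_step _ _ _ i j) /nxt (negbTE ne1) (negbTE ne2) andbT orbF /= eqxx.
Qed.

Lemma sg_row (xW : {ffun 'I_n -> bool}) : xW = onehot u ->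
  \prod_t sg0 (onehot v) xW t1 t2 t = \prod_(j : 'I_n) sg0 (onehot v) xW t1 t2 (u, j).
Proof.
move=> ->; rewrite (eq_bigr (fun p => sg0 (onehot v) (onehot u) t1 t2 (p.1, p.2))); last by case.
rewrite -(pair_bigA _ (fun i j => sg0 (onehot v) (onehot u) t1 t2 (i, j))) (bigD1 u) //= [X in _ * X]big1 ?mulr1 // => i /negbTE ne.
by rewrite big1 // => j _; rewrite /sg0 /= ffunE ne.
Qed.

Ltac ocase x y := let h := fresh "hne" in case: (eqVneq x y) => [?|h]; [try subst x| move: h; rewrite -val_eqE /= => ?].

Lemma sg_pt j : validP -> sg0 (onehot v) (onehot u) t1 t2 (u, j) =
   (if j == t1.2 then X1 else 1) * (if j == v then X2 else 1).
Proof.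
rewrite /validP /X1 /X2 /sg0 /st; case: t1 t2 => [a1 j1] [a2 j2] /=.
rewrite !ffunE !eqxx /= !xpair_eqE.
try ocase j2 j1; try ocase j1 v; try ocase j2 v; try ocase j v; try ocase j j1; try ocase j j2.
all: rewrite /= ?eqxx /= -?val_eqE /=; bb.
Qed.
End S.

Section S.
Variables (n : nat) (u v : 'I_n) (t1 t2 : 'I_n * 'I_n).

Lemma final_eq : validP v t1 t2 -> [ffun j => st (onehot v) t1 t2 n j] = finalP v t1 t2.
Proof.
move=> h; apply/ffunP => j; move: h.
rewrite /validP /finalP /st; case: t1 t2 => [a1 j1] [a2 j2] /=.
rewrite (fun_if (fun f : {ffun 'I_n -> bool} => f j)) !ffunE /= -!val_eqE /= => hv.
have := ltn_ord a1; have := ltn_ord a2; move=> l1 l2; move: hv.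
bb.
Qed.

Lemma sg_prod : validP v t1 t2 ->
  \prod_(j : 'I_n) sg0 (onehot v) (onehot u) t1 t2 (u, j) = X1 u v t1 t2 * X2 u v t1 t2.
Proof.
move=> h; rewrite (eq_bigr _ (fun j _ => @sg_pt n u v t1 t2 j h)) big_split /=.
by rewrite !prod_if1.
Qed.

Lemma Gval (A : {set 'I_n * 'I_n}) xE xS : t1 \in A -> t2 \in A ->
  Gfun A (onehot v) xE xS (onehot u) (Ind t1) (Ind t2) =
  b2i (onehot u == xE) * b2i (validP v t1 t2) * b2i (finalP v t1 t2 == xS) *
  (X1 u v t1 t2 * X2 u v t1 t2).
Proof.
move=> h1 h2; rewrite G_eval // big_split /= prod_b2i all_valid (@sg_row n u v t1 t2 _ (erefl _)).
case V: (validP v t1 t2); last by rewrite /b2i /= !(mulr0, mul0r).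
by rewrite final_eq // sg_prod // /b2i /= !mul1r mulr1.
Qed.
End S.

Section S.
Variable n : nat.
Implicit Types E : {ffun 'I_n * 'I_n -> bool}.

Lemma cnt_ind E : \sum_(t : 'I_n * 'I_n) b2i (E == Ind t) = HW1 E.
Proof.
rewrite /HW1; case: (boolP (#|[set t | E t]| == 1%N)) => [/cards1P [x hx] | h].
  have -> : E = Ind x.
    apply/ffunP => s; rewrite ffunE.
    by move/setP: hx => /(_ s); rewrite !inE.
  rewrite (bigD1 x) //= eqxx big1 ?addr0 // => t ne.
  case: eqP => // e; move/ffunP: e => /(_ x); rewrite !ffunE eqxx => /esym/eqP ex.
  by rewrite ex eqxx in ne.
rewrite big1 // => t _; case: eqP => // e; move: h; rewrite e.
suff -> : [set s | Ind t s] = [set t] by rewrite cards1.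
by apply/setP => s; rewrite !inE ffunE.
Qed.

Lemma sumHW1 (F : {ffun 'I_n * 'I_n -> bool} -> int) :
  \sum_E HW1 E * F E = \sum_(t : 'I_n * 'I_n) F (Ind t).
Proof.
rewrite (eq_bigr (fun t => \sum_E b2i (E == Ind t) * F E)); last first.
  move=> t _; rewrite -(sum_eq1 (Ind t) (F (Ind t))); apply: eq_bigr => E _.
  by case: eqP => [->|_]; rewrite ?mul0r.
rewrite exchange_big /=; apply: eq_bigr => E _.
by rewrite -mulr_suml cnt_ind.
Qed.

Lemma exch4 (T1 T2 T3 T4 : finType) (F : T1 -> T2 -> T3 -> T4 -> int) :
  \sum_(a : T1) \sum_(b : T2) \sum_(c : T3) \sum_(d : T4) F a b c d =
  \sum_(c : T3) \sum_(d : T4) \sum_(a : T1) \sum_(b : T2) F a b c d.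
Proof.
rewrite (eq_bigr (fun a => \sum_(c : T3) \sum_(d : T4) \sum_(b : T2) F a b c d)); last first.
  move=> a _; rewrite exchange_big; apply: eq_bigr => c _; by rewrite exchange_big.
rewrite exchange_big; apply: eq_bigr => c _; by rewrite exchange_big.
Qed.

Definition bndE (A : {set 'I_n * 'I_n}) E1 E2 :=
  [forall t, (t \notin A) ==> (~~ E1 t && ~~ E2 t)].

Lemma bndE_ind A t1 t2 : bndE A (Ind t1) (Ind t2) = (t1 \in A) && (t2 \in A).
Proof.
apply/forallP/andP => [h|[h1 h2] t]; last first.
  apply/implyP => ht; rewrite !ffunE; apply/andP; split; apply/negP => /eqP e; subst t.
  - by rewrite h1 in ht.
  - by rewrite h2 in ht.
split; apply/negPn/negP => ht.
- by have := implyP (h t1) ht; rewrite !ffunE eqxx.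
- by have := implyP (h t2) ht; rewrite !ffunE eqxx andbF.
Qed.

Lemma Sig_red A xN xE xS xW :
  Sig A xN xE xS xW = \sum_(t1 : 'I_n * 'I_n) \sum_(t2 : 'I_n * 'I_n)
     b2i ((t1 \in A) && (t2 \in A)) * Gfun A xN xE xS xW (Ind t1) (Ind t2).
Proof.
rewrite /Sig.
rewrite (eq_bigr (fun Hz => \sum_Vt \sum_E1 \sum_E2
   (HW1 E1 * HW1 E2 * b2i (bndE A E1 E2)) * (b2i (bndHV xN xE xS xW Hz Vt) *
      \prod_(t : 'I_n * 'I_n) vertex_val A Hz Vt E1 E2 t))); last first.
  move=> Hz _; apply: eq_bigr => Vt _; apply: eq_bigr => E1 _.
  rewrite big_mkcond /=; apply: eq_bigr => E2 _.
  have -> : boundary_ok A xN xE xS xW Hz Vt E1 E2 = bndHV xN xE xS xW Hz Vt && bndE A E1 E2 by [].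
  by case: (bndHV xN xE xS xW Hz Vt); case: (bndE A E1 E2); rewrite /b2i /= ?(mul0r, mulr0, mul1r, mulr1).
rewrite exch4.
rewrite (eq_bigr (fun E1 => HW1 E1 * \sum_E2 HW1 E2 * (b2i (bndE A E1 E2) * Gfun A xN xE xS xW E1 E2))); last first.
  move=> E1 _; rewrite mulr_sumr; apply eq_bigr => E2 _.
  rewrite /Gfun !mulr_sumr; apply eq_bigr => Hz _; rewrite !mulr_sumr; apply eq_bigr => Vt _.
  by rewrite !mulrA.
rewrite sumHW1; apply: eq_bigr => t1 _; rewrite sumHW1; apply: eq_bigr => t2 _.
by rewrite bndE_ind.
Qed.
End S.

Section C.
Variable n : nat.
Implicit Types (P s : 'I_n -> bool) (u : 'I_n).

Definition cnt P : int := \sum_(a : 'I_n) b2i (P a).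

Lemma b2iM a b : b2i (a && b) = b2i a * b2i b.
Proof. by case: a; case: b; rewrite /b2i /= ?mulr1 ?mulr0. Qed.

Lemma card_cnt P : (#|[set a | P a]|)%:Z = cnt P.
Proof.
rewrite /cnt -sum1_card -natz natr_sum big_mkcond /=; apply: eq_bigr => a _.
by rewrite inE; case: (P a).
Qed.

Lemma sum_prod (f g : 'I_n -> int) :
  \sum_(a1 : 'I_n) \sum_(a2 : 'I_n) f a1 * g a2 = (\sum_a f a) * (\sum_a g a).
Proof. rewrite mulr_suml; apply: eq_bigr => a1 _; by rewrite mulr_sumr. Qed.

Lemma sum_eq1' (a : 'I_n) (F : 'I_n -> int) : \sum_x b2i (x == a) * F x = F a.
Proof.
rewrite (bigD1 a) //= eqxx mul1r big1 ?addr0 // => x /negbTE ->; by rewrite /b2i mul0r.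
Qed.

Lemma cnt_split s u : cnt s = cnt (fun a => (a < u)%N && s a) + cnt (fun a => (u < a)%N && s a) + b2i (s u).
Proof.
rewrite /cnt -(sum_eq1' u (fun a => b2i (s a))) -!big_split /=; apply: eq_bigr => a _.
rewrite -val_eqE /=.
case: (ltngtP a u) => h; case: (s a); rewrite /b2i /= ?addr0 ?add0r ?mulr0 ?mulr1 //.
Qed.

Lemma cnt_le s u : cnt (fun a => (a <= u)%N && s a) = cnt (fun a => (a < u)%N && s a) + b2i (s u).
Proof.
rewrite /cnt -(sum_eq1' u (fun a => b2i (s a))) -!big_split /=; apply: eq_bigr => a _.
rewrite -val_eqE /=.
case: (ltngtP a u) => h; case: (s a); rewrite /b2i /= ?addr0 ?add0r ?mulr0 ?mulr1 //.
Qed.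

Lemma cnt_ge s u : cnt (fun a => (u <= a)%N && s a) = cnt (fun a => (u < a)%N && s a) + b2i (s u).
Proof.
rewrite /cnt -(sum_eq1' u (fun a => b2i (s a))) -!big_split /=; apply: eq_bigr => a _.
rewrite -val_eqE /=.
case: (ltngtP a u) => h; case: (s a); rewrite /b2i /= ?addr0 ?add0r ?mulr0 ?mulr1 //.
Qed.

Definition K s : int := \sum_(a1 : 'I_n) \sum_(a2 : 'I_n) b2i (s a1) * b2i (s a2) * b2i (a1 < a2)%N.

Lemma K_sym s : K s = \sum_(a1 : 'I_n) \sum_(a2 : 'I_n) b2i (s a1) * b2i (s a2) * b2i (a2 < a1)%N.
Proof. rewrite /K exchange_big /=; apply: eq_bigr => a1 _; apply: eq_bigr => a2 _; ring. Qed.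

Lemma diag s : \sum_(a1 : 'I_n) \sum_(a2 : 'I_n) b2i (s a1) * b2i (s a2) * b2i (a1 == a2) = cnt s.
Proof.
apply: eq_bigr => a1 _; rewrite (eq_bigr (fun a2 => b2i (a2 == a1) * (b2i (s a1) * b2i (s a1)))).
  by rewrite sum_eq1'; case: (s a1); rewrite /b2i ?mulr1.
by move=> a2 _; rewrite eq_sym; case: eqP => [->|_]; rewrite /b2i ?mulr1 ?mulr0 ?mul1r ?mul0r.
Qed.

Lemma pairK s : 2 * K s = cnt s * cnt s - cnt s.
Proof.
have E : \sum_(a1 : 'I_n) \sum_(a2 : 'I_n) (b2i (s a1) * b2i (s a2) * b2i (a1 < a2)%N +
     b2i (s a1) * b2i (s a2) * b2i (a2 < a1)%N + b2i (s a1) * b2i (s a2) * b2i (a1 == a2))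
   = \sum_(a1 : 'I_n) \sum_(a2 : 'I_n) b2i (s a1) * b2i (s a2).
  apply eq_bigr; move=> a1 _; apply eq_bigr; move=> a2 _.
  rewrite -val_eqE /=; case: (ltngtP a1 a2) => h; rewrite /b2i /=; ring.
rewrite sum_prod in E.
rewrite (eq_bigr (fun a1 => \sum_(a2 : 'I_n) b2i (s a1) * b2i (s a2) * b2i (a1 < a2)%N +
   \sum_(a2 : 'I_n) b2i (s a1) * b2i (s a2) * b2i (a2 < a1)%N +
   \sum_(a2 : 'I_n) b2i (s a1) * b2i (s a2) * b2i (a1 == a2))) in E; last by move=> a1 _; rewrite !big_split.
rewrite !big_split /= -K_sym diag -/(K s) in E.
rewrite /cnt -E /cnt; ring.
Qed.

End C.

Lemma bin2_2 k : (2 * 'C(k, 2) = k * k.-1)%N.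
Proof.
elim: k => [//|k IH]; rewrite binS bin1 mulnDr IH /=.
case: k IH => [//|k] _ /=; nia.
Qed.

Section C.
Variable n : nat.
Variables (s : 'I_n -> bool) (u : 'I_n).
Let al := cnt (fun a => (a < u)%N && s a).
Let be := cnt (fun a => (u < a)%N && s a).
Let c := b2i (s u).

Lemma cnt_b2iM (P : 'I_n -> bool) : cnt (fun a => P a && s a) = \sum_a b2i (s a) * b2i (P a).
Proof. apply eq_bigr; move=> a _; by rewrite b2iM mulrC. Qed.

Lemma colA : \sum_(a1 : 'I_n) \sum_(a2 : 'I_n) b2i (s a1) * b2i (s a2) *
    (b2i (a1 < a2)%N * (if (a1 < u < a2)%N then 1 else -1)) = 2 * al * be - K s.
Proof.
rewrite /al /be !cnt_b2iM -mulrA -sum_prod /K mulr_sumr -sumrB; apply eq_bigr; move=> a1 _.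
rewrite mulr_sumr -sumrB; apply eq_bigr; move=> a2 _.
case: (s a1); case: (s a2); rewrite /b2i /=;
  case: (ltngtP a1 a2) => h1; case: (ltngtP a1 u) => h2; case: (ltngtP u a2) => h3; rewrite /=; try lia.
Qed.

Lemma colB : \sum_(a1 : 'I_n) \sum_(a2 : 'I_n) b2i (s a1) * b2i (s a2) *
    (b2i (a2 <= a1)%N * (if (a2 <= u <= a1)%N then 1 else -1)) = 2 * (be + c) * (al + c) - K s - cnt s.
Proof.
rewrite /al /be /c -cnt_ge -cnt_le !cnt_b2iM -mulrA -sum_prod K_sym -(diag s) mulr_sumr -!sumrB; apply eq_bigr; move=> a1 _.
rewrite mulr_sumr -!sumrB; apply eq_bigr; move=> a2 _.
rewrite -val_eqE /=.
case: (s a1); case: (s a2); rewrite /b2i /=;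
  case: (ltngtP a1 a2) => h1; case: (ltngtP a1 u) => h2; case: (ltngtP u a2) => h3; rewrite /=; try lia.
Qed.
End C.

Section F.
Variable n : nat.

Lemma onehot_eq (a b : 'I_n) : (onehot a == onehot b) = (a == b).
Proof.
apply/eqP/eqP => [e|->//]; move/ffunP: e => /(_ a); rewrite !ffunE eqxx.
by move=> /esym/eqP.
Qed.

Lemma hw_onehot (v : 'I_n) : hw (onehot v) = 1%N.
Proof.
rewrite /hw -(cards1 v); apply: eq_card => i; by rewrite !inE ffunE.
Qed.

Lemma hw1 (s : {ffun 'I_n -> bool}) : hw s = 1%N -> exists v, s = onehot v.
Proof.
rewrite /hw => /eqP/cards1P [x hx]; exists x; apply/ffunP => i; rewrite ffunE.
by move/setP: hx => /(_ i); rewrite !inE.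
Qed.

Lemma sum_pair (G : 'I_n * 'I_n -> int) :
  \sum_(t : 'I_n * 'I_n) G t = \sum_(a : 'I_n) \sum_(j : 'I_n) G (a, j).
Proof. rewrite (pair_bigA _ (fun a j => G (a, j))); apply eq_bigr; by case. Qed.

Lemma Sig_val (A : {set 'I_n * 'I_n}) (u v : 'I_n) xE xS :
  Sig A (onehot v) xE xS (onehot u) = \sum_(t1 : 'I_n * 'I_n) \sum_(t2 : 'I_n * 'I_n)
    b2i (t1 \in A) * b2i (t2 \in A) * (b2i (onehot u == xE) * b2i (validP v t1 t2) *
      b2i (finalP v t1 t2 == xS) * (X1 u v t1 t2 * X2 u v t1 t2)).
Proof.
rewrite Sig_red; apply eq_bigr; move=> t1 _; apply eq_bigr; move=> t2 _.
case h1: (t1 \in A); case h2: (t2 \in A); rewrite /= ?mul0r ?mulr0 //.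
by rewrite Gval // /b2i /= !mul1r.
Qed.

Lemma part1 (A : {set 'I_n * 'I_n}) (u v : 'I_n) xE xS :
  (onehot u != xE \/ hw xS != 1%N) -> Sig A (onehot v) xE xS (onehot u) = 0.
Proof.
move=> h; rewrite Sig_val big1 // => t1 _; rewrite big1 // => t2 _.
case: h => [/negbTE -> | h]; first by rewrite /b2i /= !(mul0r, mulr0).
case: (eqVneq (finalP v t1 t2) xS) => [e|_]; last by rewrite /b2i /= !(mul0r, mulr0).
by move: h; rewrite -e /finalP; case: ifP; rewrite hw_onehot.
Qed.
End F.

Section F.
Variable n : nat.

Lemma C2z k : 2 * ('C(k, 2))%:Z = k%:Z * k%:Z - k%:Z.
Proof. have h := bin2_2 k; case: k h => [|k] h //=; lia. Qed.

Lemma colid (al be K Ca Cb : int) (b : bool) :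
  2 * K = (al + be + b2i b) * (al + be + b2i b) - (al + be + b2i b) -> 2 * Ca = al * al - al -> 2 * Cb = be * be - be ->
  (2 * al * be - K = al * be - Ca - Cb - b2i b * (al + be)) /\
  (2 * (be + b2i b) * (al + b2i b) - K - (al + be + b2i b) = al * be - Ca - Cb + (if b then 1 else - al - be)).
Proof. move=> hK ha hb; case: b hK => hK; rewrite /b2i /= in hK *; split; apply: (@mulfI _ 2) => //; rewrite ?mulrDr ?mulrBr; lia. Qed.

Lemma sum4 (F : 'I_n * 'I_n -> 'I_n * 'I_n -> int) :
  \sum_(t1 : 'I_n * 'I_n) \sum_(t2 : 'I_n * 'I_n) F t1 t2 =
  \sum_(j1 : 'I_n) \sum_(a1 : 'I_n) \sum_(a2 : 'I_n) \sum_(j2 : 'I_n) F (a1, j1) (a2, j2).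
Proof.
rewrite sum_pair exchange_big /=; apply eq_bigr; move=> j1 _; apply eq_bigr; move=> a1 _.
by rewrite sum_pair.
Qed.

End F.

Section F.
Variable n : nat.
Variables (u v : 'I_n).

Lemma pt2 (a1 j1 a2 j2 : 'I_n) :
  b2i (validP v (a1, j1) (a2, j2)) * b2i (finalP v (a1, j1) (a2, j2) == onehot v) *
  (X1 u v (a1, j1) (a2, j2) * X2 u v (a1, j1) (a2, j2)) =
  b2i (j2 == j1) * (if j1 == v then b2i (a2 <= a1)%N * (if (a2 <= u <= a1)%N then 1 else -1)
                    else b2i (a1 < a2)%N * (if (a1 < u < a2)%N then 1 else -1)).
Proof.
rewrite /validP /finalP /X1 /X2 /=.
case: (eqVneq j1 j2) => [e|ne]; [subst j2; rewrite ?eqxx /=|].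
  case: (j1 == v); rewrite /b2i /= ?mul1r;
  case: (leqP a2 a1) => h1; case: (leqP a2 u) => h2; case: (leqP u a1) => h3;
  case: (ltnP a1 u) => h4; case: (ltnP u a2) => h5; rewrite /= ?mul1r ?mul0r //; lia.
rewrite /= onehot_eq.
case: (eqVneq j1 v) => [e|n1]; last by rewrite /b2i /= !(mul0r, mulr0).
subst j1; move: ne; rewrite eq_sym => /negbTE ->; by rewrite /b2i /= !(mul0r, mulr0).
Qed.


Variable A : {set 'I_n * 'I_n}.

Definition Rz (z a1 a2 : 'I_n) : int :=
  if z == v then b2i (a2 <= a1)%N * (if (a2 <= u <= a1)%N then 1 else -1)
  else b2i (a1 < a2)%N * (if (a1 < u < a2)%N then 1 else -1).

Definition qterm (z : 'I_n) : int := ((alpha A u z * beta A u z)%:Z - ('C(alpha A u z, 2))%:Z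
                   - ('C(beta A u z, 2))%:Z).

Lemma colsum_eq (z : 'I_n) :
  \sum_(a1 : 'I_n) \sum_(a2 : 'I_n) b2i ((a1, z) \in A) * b2i ((a2, z) \in A) * Rz z a1 a2 =
  qterm z - b2i (z != v) * b2i ((u, z) \in A) * ((alpha A u z)%:Z + (beta A u z)%:Z)
  + b2i (z == v) * (if (u, z) \in A then 1 else - (alpha A u z)%:Z - (beta A u z)%:Z).
Proof.
set s := fun a : 'I_n => (a, z) \in A.
have ea : (alpha A u z)%:Z = cnt (fun a => (a < u)%N && s a) by rewrite -card_cnt.
have eb : (beta A u z)%:Z = cnt (fun a => (u < a)%N && s a) by rewrite -card_cnt.
have hm := cnt_split s u.
have hK := pairK s.
have ha := C2z (alpha A u z).
have hb := C2z (beta A u z).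
rewrite hm -ea -eb in hK.
have [c1 c2] := colid hK ha hb.
rewrite /qterm PoszM /Rz; case: (eqVneq z v) => [e|ne]; rewrite /b2i /=.
- have := colB s u; rewrite -ea -eb hm -ea -eb => ->.
  rewrite c2 -/(s u) /b2i; case: (s u); ring.
- have := colA s u; rewrite -ea -eb => ->.
  rewrite c1 -/(s u) /b2i; case: (s u); ring.
Qed.
End F.

Section F.
Variable n : nat.
Variables (u v : 'I_n) (A : {set 'I_n * 'I_n}).

Lemma part2 : Sig A (onehot v) (onehot u) (onehot v) (onehot u) =
  if (u, v) \in A then qq A u - rr A u v - ss A u v + 1
  else qq A u - rr A u v - ss A u v - (alpha A u v)%:Z - (beta A u v)%:Z.
Proof.
rewrite Sig_val eqxx sum4.
rewrite (eq_bigr (fun z => \sum_(a1 : 'I_n) \sum_(a2 : 'I_n)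
   b2i ((a1, z) \in A) * b2i ((a2, z) \in A) * Rz u v z a1 a2)); last first.
  move=> j1 _; apply eq_bigr; move=> a1 _; apply eq_bigr; move=> a2 _.
  rewrite (eq_bigr (fun j2 => b2i (j2 == j1) * (b2i ((a1, j1) \in A) * b2i ((a2, j2) \in A) * Rz u v j1 a1 a2))).
    by rewrite sum_eq1'.
  move=> j2 _; have -> : b2i true = 1 by [].
  rewrite mul1r pt2 /Rz; ring.
rewrite (eq_bigr _ (fun z _ => @colsum_eq n u v A z)).
rewrite big_split /= sumrB sum_eq1'.
have -> : \sum_(z : 'I_n) qterm u A z = qq A u by [].
have -> : \sum_(z : 'I_n) b2i (z != v) * b2i ((u, z) \in A) * ((alpha A u z)%:Z + (beta A u z)%:Z)
   = rr A u v + ss A u v.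
  symmetry; rewrite /rr /ss -big_split /= big_mkcond /=; apply eq_bigr; move=> z _.
  by case: (z != v); case: ((u, z) \in A); rewrite /b2i /= ?mul0r ?mul1r ?addr0 // addrC.
rewrite /qq /qterm; case: ((u, v) \in A); ring.
Qed.
End F.

Lemma sum_prodT (T : finType) (f g : T -> int) :
  \sum_(a1 : T) \sum_(a2 : T) f a1 * g a2 = (\sum_a f a) * (\sum_a g a).
Proof. rewrite mulr_suml; apply eq_bigr; move=> a1 _; by rewrite mulr_sumr. Qed.

Section F.
Variable n : nat.
Variables (u v w : 'I_n) (A : {set 'I_n * 'I_n}).
Hypothesis vw : v != w.

Lemma pt3 (a1 j1 a2 j2 : 'I_n) :
  b2i (validP v (a1, j1) (a2, j2)) * b2i (finalP v (a1, j1) (a2, j2) == onehot w) *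
  (X1 u v (a1, j1) (a2, j2) * X2 u v (a1, j1) (a2, j2)) =
  (b2i (j1 == w) * (if (a1 < u)%N then -1 else 1)) * (b2i (j2 == v) * (if (u < a2)%N then -1 else 1)).
Proof.
rewrite /validP /finalP /X1 /X2 /=.
case: (eqVneq j1 j2) => [e|ne]; [subst j2|].
  rewrite onehot_eq (negbTE vw) /b2i /= !(mul0r, mulr0).
  case: (eqVneq j1 w) => [e|_]; last by rewrite !(mul0r, mulr0).
  by subst j1; rewrite eq_sym (negbTE vw) /= !(mul0r, mulr0).
rewrite onehot_eq; case: (j1 == w); case: (j2 == v); rewrite /b2i /= ?(mul0r, mulr0, mul1r, mulr1) //.
Qed.

Lemma sgn_lt (s : 'I_n -> bool) :
  \sum_(a : 'I_n) b2i (s a) * (if (a < u)%N then -1 else 1) = cnt s - 2 * cnt (fun a => (a < u)%N && s a).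
Proof.
rewrite /cnt mulr_sumr -sumrB; apply eq_bigr; move=> a _.
by case: (s a); case: (a < u)%N; rewrite /b2i /=; lia.
Qed.

Lemma sgn_gt (s : 'I_n -> bool) :
  \sum_(a : 'I_n) b2i (s a) * (if (u < a)%N then -1 else 1) = cnt s - 2 * cnt (fun a => (u < a)%N && s a).
Proof.
rewrite /cnt mulr_sumr -sumrB; apply eq_bigr; move=> a _.
by case: (s a); case: (u < a)%N; rewrite /b2i /=; lia.
Qed.

Lemma colsel (z : 'I_n) (h : 'I_n -> int) :
  \sum_(t : 'I_n * 'I_n) b2i (t \in A) * (b2i (t.2 == z) * h t.1) =
  \sum_(a : 'I_n) b2i ((a, z) \in A) * h a.
Proof.
rewrite sum_pair; apply eq_bigr; move=> a _.
rewrite (eq_bigr (fun j => b2i (j == z) * (b2i ((a, j) \in A) * h a))) ?sum_eq1' //.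
move=> j _ /=; ring.
Qed.

Lemma part3 : Sig A (onehot v) (onehot u) (onehot w) (onehot u) =
     match (u, v) \in A, (u, w) \in A with
     | false, false => pp A u v w
     | false, true => pp A u v w + (alpha A u v)%:Z - (beta A u v)%:Z
     | true, false => pp A u v w + (beta A u w)%:Z - (alpha A u w)%:Z
     | true, true => pp A u v w + (beta A u w)%:Z - (alpha A u w)%:Z
                     + (alpha A u v)%:Z - (beta A u v)%:Z + 1
     end.
Proof.
rewrite Sig_val eqxx.
rewrite (eq_bigr (fun t1 => \sum_(t2 : 'I_n * 'I_n)
   (b2i (t1 \in A) * (b2i (t1.2 == w) * (if (t1.1 < u)%N then -1 else 1))) *
   (b2i (t2 \in A) * (b2i (t2.2 == v) * (if (u < t2.1)%N then -1 else 1))))); last first.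
  move=> [a1 j1] _; apply eq_bigr; move=> [a2 j2] _.
  have -> : b2i true = 1 by [].
  rewrite mul1r pt3 /=; ring.
rewrite sum_prodT (colsel w (fun a => if (a < u)%N then -1 else 1)) (colsel v (fun a => if (u < a)%N then -1 else 1)) sgn_lt sgn_gt.
set s1 := fun a => (a, w) \in A; set s2 := fun a => (a, v) \in A.
rewrite (cnt_split s1 u) (cnt_split s2 u).
rewrite -!card_cnt -/(alpha A u w) -/(beta A u w) -/(alpha A u v) -/(beta A u v) /pp /s1 /s2.
by case: ((u, v) \in A); case: ((u, w) \in A); rewrite /b2i /=; ring.
Qed.
End F.


Unset Implicit Arguments.

Theorem mainTheorem12 (n : nat) (A : {set 'I_n * 'I_n})
  (xN xE xS xW : {ffun 'I_n -> bool}) :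
  phi_one xN xW ->
  ((xW != xE \/ hw xS != 1%N) -> Sig A xN xE xS xW = 0) /\
  (phi_prop xN xE xS xW ->
   forall u v : 'I_n, xW = onehot u -> xN = onehot v ->
   Sig A xN xE xS xW =
     if (u, v) \in A then qq A u - rr A u v - ss A u v + 1
     else qq A u - rr A u v - ss A u v - (alpha A u v)%:Z - (beta A u v)%:Z) /\
  (xW = xE -> hw xS = 1%N -> xN != xS ->
   forall u v w : 'I_n, xW = onehot u -> xN = onehot v -> xS = onehot w ->
   Sig A xN xE xS xW =
     match (u, v) \in A, (u, w) \in A with
     | false, false => pp A u v w
     | false, true => pp A u v w + (alpha A u v)%:Z - (beta A u v)%:Z
     | true, false => pp A u v w + (beta A u w)%:Z - (alpha A u w)%:Z
     | true, true => pp A u v w + (beta A u w)%:Z - (alpha A u w)%:Z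
                     + (alpha A u v)%:Z - (beta A u v)%:Z + 1
     end).
Proof.
case=> /hw1 [v0 eN] /hw1 [u0 eW]; split; [|split].
- by move=> h; rewrite eN eW; apply: part1; rewrite -eW.
- case=> eNS eWE u v hu hv.
  have e1 : u0 = u by apply/eqP; rewrite -onehot_eq -eW hu.
  have e2 : v0 = v by apply/eqP; rewrite -onehot_eq -eN hv.
  subst u0 v0; rewrite -eNS -eWE hu hv; exact: part2.
- move=> eWE _ hNS u v w hu hv hw.
  rewrite -eWE hu hv hw; apply: part3.
  by rewrite -onehot_eq -hv -hw.
Qed.
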